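(* Let $n,k,r$ be positive integers with $r\le k$, let $\mathcal{F}=\mathcal{F}(n,k,r)$, and let $\gamma>10r/k$. If $T\subseteq V(\mathcal{F})$ with $|T|>\gamma\, v(\mathcal{F})=\gamma k^n$, then $$e(\mathcal{F}[T])\ge\Big(\gamma-\frac{r}{k}\Big)^r e(\mathcal{F}).$$
   Context: $\mathcal{F}(n,k,r)$ is the $r$-uniform hypergraph with vertex set $[k]^n$ whose edges are the $r$-element subsets of $[k]^n$ lying on a common axis-parallel line, i.e., $r$ points that agree in all but one coordinate. Thus $e(\mathcal{F})=n\binom{k}{r}k^{n-1}$. $\mathcal{F}[T]$ denotes the subhypergraph induced by $T$. *)

(* Defs.v *)
From HB Require Import structures.
From mathcomp Require Import all_boot all_order all_algebra.
Set Implicit Arguments. Unset Strict Implicit. Unset Printing Implicit Defensive.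
Import Order.TTheory GRing.Theory Num.Theory.

Definition vtx (n k : nat) := {ffun 'I_n -> 'I_k}.

Definition on_line (n k : nat) (i : 'I_n) (S : {set vtx n k}) : bool :=
  [forall x in S, forall y in S, forall j : 'I_n, (j != i) ==> (x j == y j)].

(* Edges of F(n,k,r)[T]: an edge is an r-subset S of T together with the
   direction i of the axis-parallel line containing it.  For r >= 2 the
   direction is determined by S; for r = 1 this counts each vertex once per
   direction, matching e(F) = n * C(k,r) * k^(n-1). *)
Definition Fedges (n k r : nat) (T : {set vtx n k}) : {set 'I_n * {set vtx n k}} :=
  [set p : 'I_n * {set vtx n k} |
     [&& #|p.2| == r, p.2 \subset T & on_line p.1 p.2]].

Definition eF (n k r : nat) (T : {set vtx n k}) : nat := #|Fedges r T|.

(* Main.v *)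
Require Import Defs.
From HB Require Import structures.
From mathcomp Require Import all_boot all_order all_algebra.
From mathcomp Require Import ring lra zify.
Set Implicit Arguments. Unset Strict Implicit. Unset Printing Implicit Defensive.
Import Order.TTheory GRing.Theory Num.Theory.

Section Comb.
Variables (n k : nat) (z : 'I_k) (i : 'I_n).

Definition proj (x : vtx n k) : vtx n k := [ffun j => if j == i then z else x j].
Definition PP : {set vtx n k} := [set y : vtx n k | y i == z].
Definition line (T : {set vtx n k}) (y : vtx n k) := [set x in T | proj x == y].

Lemma proj_eqP (x x' : vtx n k) : reflect (forall j, j != i -> x j = x' j) (proj x == proj x').
Proof.
apply: (iffP eqP) => [H j Hj | H].
  by have := congr1 (fun f : vtx n k => f j) H; rewrite /= !ffunE (negbTE Hj).
by apply/ffunP => j; rewrite !ffunE; case: eqP => // /eqP Hj; rewrite H.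
Qed.

Lemma proj_in x : proj x \in PP.
Proof. by rewrite inE ffunE eqxx. Qed.

Lemma sum_line T : \sum_(y in PP) #|line T y| = #|T|.
Proof.
rewrite -[RHS]sum1_card [RHS](partition_big proj (mem PP)) /=; last by move=> x _; exact: proj_in.
by apply: eq_bigr => y _; rewrite -sum1_card; apply: eq_bigl => x; rewrite !inE.
Qed.

Lemma card_line y : y \in PP -> #|line [set: vtx n k] y| = k.
Proof.
rewrite inE => /eqP Hy.
pose f (c : 'I_k) : vtx n k := [ffun j => if j == i then c else y j].
have finj : injective f.
  by move=> c c' /(congr1 (fun g : vtx n k => g i)); rewrite /f !ffunE eqxx.
have -> : line [set: vtx n k] y = [set f c | c in 'I_k].
  apply/setP => x; rewrite !inE; apply/idP/imsetP.
    move=> /eqP Hx; exists (x i) => //; apply/ffunP => j; rewrite ffunE.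
    case: eqP => [->//|/eqP Hj]; by rewrite -Hx ffunE (negbTE Hj).
  move=> [c _ ->]; apply/eqP/ffunP => j; rewrite !ffunE.
  by case: eqP => [->|//]; rewrite Hy.
by rewrite card_imset // card_ord.
Qed.

Definition Adir (r : nat) (T : {set vtx n k}) : {set {set vtx n k}} :=
  [set S : {set vtx n k} | [&& #|S| == r, S \subset T & on_line i S]].

Lemma on_lineP (S : {set vtx n k}) :
  reflect (forall x x', x \in S -> x' \in S -> proj x = proj x') (on_line i S).
Proof.
apply: (iffP forall_inP) => [H x x' Hx Hx' | H x Hx].
  apply/eqP/proj_eqP => j Hj.
  by have /forall_inP /(_ x' Hx') /forallP /(_ j) := H x Hx; rewrite Hj => /eqP.
apply/forall_inP => x' Hx'; apply/forallP => j; apply/implyP => Hj.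
by apply/eqP; move: (H x x' Hx Hx') => /eqP /proj_eqP; apply.
Qed.

Lemma card_Adir r T : (0 < r)%N ->
  #|Adir r T| = (\sum_(y in PP) 'C(#|line T y|, r))%N.
Proof.
move=> r0.
pose f (S : {set vtx n k}) := if [pick x in S] is Some x then proj x else [ffun _ => z].
have fP S : f S \in PP.
  by rewrite /f; case: pickP => [x _|_]; [exact: proj_in | rewrite inE ffunE].
have fS (S : {set vtx n k}) (x : vtx n k) : x \in S -> on_line i S -> f S = proj x.
  move=> Hx /on_lineP HS; rewrite /f; case: pickP => [x' Hx'|/(_ x)]; last by rewrite Hx.
  exact: HS.
rewrite -sum1_card (partition_big f (mem PP)) /=; last by move=> S _; exact: fP.
apply: eq_bigr => y Hy; rewrite -cards_draws -sum1_card; apply: eq_bigl => S.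
rewrite !inE; apply/idP/idP.
  case/andP=> /and3P [/eqP HSr HST HSl] /eqP HfS; rewrite HSr eqxx andbT.
  apply/subsetP => x Hx; rewrite !inE (subsetP HST _ Hx) /= -HfS (fS S x) //.
case/andP=> HSy /eqP HSr.
have HSl : on_line i S.
  apply/on_lineP => x x' Hx Hx'.
  move: (subsetP HSy _ Hx) (subsetP HSy _ Hx'); rewrite !inE => /andP[_ /eqP->] /andP[_ /eqP->] //.
have [x Hx] : exists x, x \in S.
  by apply/set0Pn; rewrite -card_gt0 HSr.
rewrite HSr eqxx HSl andbT /=; apply/andP; split.
  by apply/subsetP => x' Hx'; move: (subsetP HSy _ Hx'); rewrite inE => /andP[].
by rewrite (fS S x) //; move: (subsetP HSy _ Hx); rewrite inE => /andP[].
Qed.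

End Comb.

Lemma eF_sum n k r (T : {set vtx n k}) : eF r T = (\sum_(i : 'I_n) #|Adir i r T|)%N.
Proof.
rewrite /eF -sum1_card.
rewrite [RHS](eq_bigr (fun i => \sum_(S in Adir i r T) 1)%N); last by move=> *; rewrite sum1_card.
rewrite pair_big_dep /=; apply: eq_bigl => -[j S]; by rewrite !inE.
Qed.
Lemma leq_expw m n e : m <= n -> m ^ e <= n ^ e.
Proof. by case: e => [//|e] H; rewrite leq_exp2r. Qed.

Lemma ffact_lb t r : (t - r) ^ r <= t ^_ r.
Proof.
elim: r => [|r IH]; first by rewrite ffactn0.
rewrite ffactnSr expnS mulnC; apply: leq_mul; last by apply: leq_sub2l.
apply: leq_trans IH; apply: leq_expw; apply: leq_sub2l; exact: leqnSn.
Qed.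

Lemma ffact_ub k r : k ^_ r <= k ^ r.
Proof.
elim: r => [|r IH]; first by rewrite ffactn0.
by rewrite ffactnSr expnSr; apply: leq_mul => //; exact: leq_subr.
Qed.

Lemma bin_bound k t r : 'C(k, r) * (t - r) ^ r <= 'C(t, r) * k ^ r.
Proof.
rewrite -(@leq_pmul2r r`!) ?fact_gt0 //.
rewrite mulnAC bin_ffact [X in _ <= X]mulnAC bin_ffact mulnC.
by apply: leq_mul; [exact: ffact_lb | exact: ffact_ub].
Qed.

Local Open Scope ring_scope.

Lemma tangent (R : realFieldType) (r : nat) (x a : R) : 0 <= x -> 0 <= a ->
  a ^+ r.+1 + r.+1%:R * a ^+ r * (x - a) <= x ^+ r.+1.
Proof.
move=> x0 a0; elim: r => [|r IH]; first by rewrite !expr1 expr0 mulr1 mul1r; lra.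
have p0 : 0 <= a ^+ r by exact: exprn_ge0.
rewrite [x ^+ r.+2]exprS.
apply: le_trans (ler_wpM2l x0 IH).
rewrite !exprS -!mulrA.
set p := a ^+ r.
have -> : r.+2%:R = r.+1%:R + 1 :> R by rewrite -natr1.
have q0 : 0 <= r.+1%:R :> R by exact: ler0n.
set q := r.+1%:R.
rewrite -subr_ge0.
have -> : x * (a * p + q * (p * (x - a))) - (a * (a * p) + (q + 1) * (a * (p * (x - a))))
  = q * p * ((x - a) * (x - a)) by ring.
apply: mulr_ge0; first exact: mulr_ge0.
by rewrite -expr2 sqr_ge0.
Qed.

Lemma pointwise (R : realFieldType) (k t r' : nat) (g : R) :
  (0 < k)%N -> (t <= k)%N -> 0 < g - r'.+1%:R / k%:R ->
  'C(k, r'.+1)%:R * (g - r'.+1%:R / k%:R) ^+ r'.+1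
  + 'C(k, r'.+1)%:R * r'.+1%:R * (g - r'.+1%:R / k%:R) ^+ r' / k%:R * (t%:R - g * k%:R)
  <= 'C(t, r'.+1)%:R :> R.
Proof.
move=> k0 tk.
set a := g - _; set r := r'.+1; set C := 'C(k, r)%:R => a0.
have kR : 0 < k%:R :> R by rewrite ltr0n.
have C0 : 0 <= C by exact: ler0n.
pose x : R := (t%:R - r%:R) / k%:R.
have -> : C * a ^+ r + C * r%:R * a ^+ r' / k%:R * (t%:R - g * k%:R)
        = C * (a ^+ r + r%:R * a ^+ r' * (x - a)).
  rewrite /x /a /r; field; by rewrite lt0r_neq0.
case: (leqP r t) => Hrt.
  have x0 : 0 <= x by rewrite /x; apply: divr_ge0; [rewrite subr_ge0 ler_nat | exact: ltW].
  apply: le_trans (ler_wpM2l C0 (tangent r' x0 (ltW a0))) _.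
  rewrite /x expr_div_n mulrA ler_pdivrMr ?exprn_gt0 //.
  rewrite -natrB // /C -!natrX -!natrM ler_nat; exact: bin_bound.
rewrite bin_small // mulr_ge0_le0 //.
have -> : a ^+ r + r%:R * a ^+ r' * (x - a) = a ^+ r' * (a + r%:R * (x - a)).
  by rewrite /r exprS; ring.
rewrite mulr_ge0_le0 ?exprn_ge0 ?ltW //.
have xle : x < 0.
  rewrite /x; by rewrite pmulr_llt0 ?invr_gt0 // subr_lt0 ltr_nat.
have r1 : 1 <= r%:R :> R by rewrite ler1n.
have h1 : r%:R * x < 0.
  by rewrite pmulr_rlt0 ?ltr0n.
have h2 : a <= r%:R * a by rewrite ler_peMl // ltW.
rewrite mulrBr; clearbody x a; lra.
Qed.

Theorem lemma7p1 (R : realFieldType) (n k r : nat) (gamma : R)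
  (T : {set vtx n k}) :
  (0 < n)%N -> (0 < k)%N -> (0 < r)%N -> (r <= k)%N ->
  10 * r%:R / k%:R < gamma ->
  gamma * (k ^ n)%:R < (#|T|)%:R ->
  (gamma - r%:R / k%:R) ^+ r * (eF r [set: vtx n k])%:R <= (eF r T)%:R.
Proof.
move=> n0 k0 r0 rk Hg HT.
case: r r0 rk Hg HT => [//|r'] _ rk Hg HT.
have a0 : 0 < gamma - r'.+1%:R / k%:R.
  have q0 : 0 <= r'.+1%:R / k%:R :> R by apply: divr_ge0; apply: ler0n.
  move: q0 Hg; rewrite -mulrA; set q := _ / _; lra.
set a := gamma - _ in a0 *.
pose z := Ordinal k0.
rewrite !eF_sum !natr_sum mulr_sumr; apply: ler_sum => i _.
rewrite !(card_Adir z) // !natr_sum mulr_sumr.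
rewrite (eq_bigr (fun y => 'C(k, r'.+1)%:R * a ^+ r'.+1)); last first.
  by move=> y Hy; rewrite card_line // mulrC.
set C := 'C(k, r'.+1)%:R.
set c := C * r'.+1%:R * a ^+ r' / k%:R.
have c0 : 0 <= c.
  rewrite /c; apply: divr_ge0; last exact: ler0n.
  by rewrite !mulr_ge0 ?ler0n ?exprn_ge0 ?ltW.
have Ss : 0 <= \sum_(y in PP z i) ((#|line z i T y|)%:R - gamma * k%:R).
  rewrite sumrB -natr_sum sum_line -mulr_sumr -natr_sum.
  have -> : (\sum_(y in PP z i) k)%N = (k ^ n)%N.
    rewrite -(eq_bigr _ (fun y Hy => card_line Hy)) sum_line.
    by rewrite cardsT card_ffun !card_ord.
  by rewrite subr_ge0 ltW.
apply: (@le_trans _ _ (\sum_(y in PP z i) (C * a ^+ r'.+1 + c * ((#|line z i T y|)%:R - gamma * k%:R)))).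
  rewrite big_split /= lerDl -mulr_sumr; exact: mulr_ge0.
apply: ler_sum => y Hy; apply: pointwise => //.
rewrite -[X in (_ <= X)%N](card_line Hy); apply: subset_leq_card; apply/subsetP => x.
by rewrite !inE => /andP[_ ->].
Qed.
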